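(* Let $\Gamma$ act ergodically by measure preserving maps on a probability space $(X,\mu)$. Let $S$ be a finite symmetric generating set of $\Gamma$, let $H$ be a subgroup of $\Gamma$ of index $k$, let $C$ be a right coset representative system for $H$ in $\Gamma$ and let $T=N(S,C)$. Then for every measurable $A\subseteq X$ with $0<\mu(A)\le 1/(2k)$, $$\frac{\mu(AT\setminus A)}{\mu(A)}\ge\frac{\mathrm{h}(X,S)}{k}.$$
   Context: Actions are right actions; $AS=\{as: a\in A, s\in S\}$. Cheeger constant: $\mathrm{h}(X,S)=\inf\{\mu(AS\setminus A)/\mu(A): 0<\mu(A)\le1/2\}$. Nielsen–Schreier set: for $s\in S$, $c\in C$ let $p_{c,s}\in C$ be the unique element with $csp_{c,s}^{-1}\in H$; $N(S,C)=\{csp_{c,s}^{-1}: s\in S, c\in C\}$. *)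

(* Defs.v *)
From Stdlib Require Import Reals List.
Open Scope R_scope.
Set Implicit Arguments.

Record is_group (G : Type) (mul : G -> G -> G) (inv : G -> G) (one : G) : Prop := {
  grp_assoc : forall a b c, mul a (mul b c) = mul (mul a b) c;
  grp_mul1g : forall a, mul one a = a;
  grp_mulg1 : forall a, mul a one = a;
  grp_mulVg : forall a, mul (inv a) a = one;
  grp_mulgV : forall a, mul a (inv a) = one
}.

Definition is_subgroup (G : Type) (mul : G -> G -> G) (inv : G -> G) (one : G)
  (H : G -> Prop) : Prop :=
  H one /\ (forall a b, H a -> H b -> H (mul a b)) /\ (forall a, H a -> H (inv a)).

Definition symmetric_set (G : Type) (inv : G -> G) (S : list G) : Prop :=
  forall s, In s S -> In (inv s) S.

Definition generates (G : Type) (mul : G -> G -> G) (one : G) (S : list G) : Prop :=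
  forall g, exists l : list G, (forall s, In s l -> In s S) /\ g = fold_right mul one l.

(* C is a right coset representative system for H (right cosets H c):
   each g lies in H c for exactly one c in C, and C has no repetitions,
   so the index of H is length C. *)
Definition right_transversal (G : Type) (mul : G -> G -> G) (inv : G -> G)
  (H : G -> Prop) (C : list G) : Prop :=
  NoDup C /\ forall g, exists! c, In c C /\ H (mul g (inv c)).

Definition NS_set (G : Type) (mul : G -> G -> G) (inv : G -> G)
  (H : G -> Prop) (S C : list G) : G -> Prop :=
  fun t => exists s c p, In s S /\ In c C /\ In p C /\
    H (mul (mul c s) (inv p)) /\ t = mul (mul c s) (inv p).

Definition set_union_seq (X : Type) (F : nat -> X -> Prop) : X -> Prop :=
  fun x => exists n, F n x.

Record is_sigma_algebra (X : Type) (M : (X -> Prop) -> Prop) : Prop := {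
  sa_full : M (fun _ => True);
  sa_compl : forall A, M A -> M (fun x => ~ A x);
  sa_union : forall F : nat -> X -> Prop, (forall n, M (F n)) -> M (set_union_seq F)
}.

Record is_probability (X : Type) (M : (X -> Prop) -> Prop) (mu : (X -> Prop) -> R) : Prop := {
  pr_sigma : is_sigma_algebra M;
  pr_nonneg : forall A, M A -> 0 <= mu A;
  pr_empty : mu (fun _ => False) = 0;
  pr_sigma_add : forall F : nat -> X -> Prop, (forall n, M (F n)) ->
     (forall n m x, n <> m -> F n x -> F m x -> False) ->
     infinite_sum (fun n => mu (F n)) (mu (set_union_seq F));
  pr_full : mu (fun _ => True) = 1
}.

Definition is_right_action (G X : Type) (mul : G -> G -> G) (one : G)
  (act : X -> G -> X) : Prop :=
  (forall x, act x one = x) /\ (forall x g h, act (act x g) h = act x (mul g h)).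

Definition preimage_act (G X : Type) (act : X -> G -> X) (g : G) (A : X -> Prop) : X -> Prop :=
  fun x => A (act x g).

Definition measure_preserving_action (G X : Type) (M : (X -> Prop) -> Prop)
  (mu : (X -> Prop) -> R) (act : X -> G -> X) : Prop :=
  forall g A, M A -> M (preimage_act act g A) /\ mu (preimage_act act g A) = mu A.

Definition ergodic (G X : Type) (M : (X -> Prop) -> Prop)
  (mu : (X -> Prop) -> R) (act : X -> G -> X) : Prop :=
  forall A, M A -> (forall g x, A (act x g) <-> A x) -> mu A = 0 \/ mu A = 1.

Definition set_act (G X : Type) (act : X -> G -> X) (A : X -> Prop) (T : G -> Prop) : X -> Prop :=
  fun x => exists a t, A a /\ T t /\ x = act a t.

Definition setminus (X : Type) (A B : X -> Prop) : X -> Prop := fun x => A x /\ ~ B x.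

Definition cheeger_ratios (G X : Type) (M : (X -> Prop) -> Prop)
  (mu : (X -> Prop) -> R) (act : X -> G -> X) (S : list G) : R -> Prop :=
  fun r => exists A, M A /\ 0 < mu A /\ mu A <= 1/2 /\
    r = mu (setminus (set_act act A (fun s => In s S)) A) / mu A.

Definition is_inf (E : R -> Prop) (m : R) : Prop :=
  (forall r, E r -> m <= r) /\ (forall m', (forall r, E r -> m' <= r) -> m' <= m).

Definition cheeger_constant (G X : Type) (M : (X -> Prop) -> Prop)
  (mu : (X -> Prop) -> R) (act : X -> G -> X) (S : list G) (m : R) : Prop :=
  is_inf (cheeger_ratios M mu act S) m.

(* Main.v *)
Require Import Defs.
From Stdlib Require Import Reals List Lra Lia Psatz Classical FunctionalExtensionality PropExtensionality.
Open Scope R_scope.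

Lemma set_ext {X : Type} (A B : X -> Prop) : (forall x, A x <-> B x) -> A = B.
Proof. intro H; apply functional_extensionality; intro x; apply propositional_extensionality; apply H. Qed.

Definition two_seq {X : Type} (A B : X -> Prop) (n : nat) : X -> Prop :=
  match n with 0%nat => A | 1%nat => B | _ => fun _ => False end.

Lemma M_empty {X} {M : (X -> Prop) -> Prop} {mu : (X -> Prop) -> R} (Hp : is_probability M mu) : M (fun _ => False).
Proof. destruct Hp as [[Hf Hc Hu] _ _ _ _].
 replace (fun _ : X => False) with (fun x : X => ~ (fun _ : X => True) x). apply Hc; exact Hf.
 apply set_ext; intro x; tauto. Qed.

Lemma M_union2 {X} {M : (X -> Prop) -> Prop} {mu : (X -> Prop) -> R} (Hp : is_probability M mu) {A B} :
  M A -> M B -> M (fun x => A x \/ B x).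
Proof. intros HA HB. destruct Hp as [[Hf Hc Hu] _ _ _ _].
 replace (fun x => A x \/ B x) with (set_union_seq (fun n : nat => match n with 0%nat => A | _ => B end)).
 apply Hu. intros [|n]; simpl; auto.
 apply set_ext; intro x; unfold set_union_seq; split.
 - intros [[|n] H]; auto.
 - intros [H|H]; [exists 0%nat | exists 1%nat]; auto. Qed.

Lemma M_compl {X} {M : (X -> Prop) -> Prop} {mu : (X -> Prop) -> R} (Hp : is_probability M mu) {A} :
  M A -> M (fun x => ~ A x).
Proof. destruct Hp as [[Hf Hc Hu] _ _ _ _]. auto. Qed.

Lemma M_inter {X} {M : (X -> Prop) -> Prop} {mu : (X -> Prop) -> R} (Hp : is_probability M mu) {A B} :
  M A -> M B -> M (fun x => A x /\ B x).
Proof. intros HA HB.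
 replace (fun x => A x /\ B x) with (fun x => ~ ((fun y => ~ A y) x \/ (fun y => ~ B y) x)).
 apply (M_compl Hp). apply (M_union2 Hp); apply (M_compl Hp); auto.
 apply set_ext; intro x; split. intro H. destruct (classic (A x)); destruct (classic (B x)); tauto. tauto.
Qed.

Lemma M_and_prop {X} {M : (X -> Prop) -> Prop} {mu : (X -> Prop) -> R} (Hp : is_probability M mu) (P : Prop) Y :
  M Y -> M (fun x => P /\ Y x).
Proof. intro HY. destruct (classic P) as [HP|HP].
 - replace (fun x => P /\ Y x) with Y; auto. apply set_ext; tauto.
 - replace (fun x => P /\ Y x) with (fun _ : X => False). apply (M_empty Hp). apply set_ext; tauto.
Qed.

Lemma mu_add2 {X} {M : (X -> Prop) -> Prop} {mu : (X -> Prop) -> R} (Hp : is_probability M mu) {A B} :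
  M A -> M B -> (forall x, A x -> B x -> False) -> mu (fun x => A x \/ B x) = mu A + mu B.
Proof. intros HA HB Hd. pose proof Hp as Hp'. destruct Hp' as [Hs Hnn He Hadd Hfull].
 assert (HM : forall n, M (two_seq A B n)). { intros [|[|n]]; simpl; auto. eapply M_empty; eauto. }
 assert (Hdis : forall n m x, n <> m -> two_seq A B n x -> two_seq A B m x -> False).
 { intros [|[|n]] [|[|m]] x Hnm; simpl; intros H1 H2;
   try (exfalso; apply Hnm; reflexivity); try contradiction; eauto. }
 pose proof (Hadd _ HM Hdis) as H1.
 assert (E : set_union_seq (two_seq A B) = fun x => A x \/ B x).
 { apply set_ext; intro x; unfold set_union_seq; split.
   - intros [[|[|n]] H]; simpl in H; tauto.
   - intros [H|H]; [exists 0%nat | exists 1%nat]; auto. }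
 rewrite E in H1.
 assert (Hs2 : forall n, sum_f_R0 (fun n => mu (two_seq A B n)) (S n) = mu A + mu B).
 { induction n. reflexivity.
   change (sum_f_R0 (fun n => mu (two_seq A B n)) (S n) + mu (two_seq A B (S (S n))) = mu A + mu B).
   rewrite IHn. simpl. rewrite He. ring. }
 assert (H2 : infinite_sum (fun n => mu (two_seq A B n)) (mu A + mu B)).
 { intros eps Heps. exists 1%nat. intros n Hn. destruct n as [|n]; [lia|].
   rewrite Hs2. rewrite R_dist_eq. assumption. }
 exact (uniqueness_sum _ _ _ H1 H2).
Qed.

Lemma mu_mono {X} {M : (X -> Prop) -> Prop} {mu : (X -> Prop) -> R} (Hp : is_probability M mu) {A B} :
  M A -> M B -> (forall x, A x -> B x) -> mu A <= mu B.
Proof. intros HA HB Hs.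
 assert (E : B = fun x => A x \/ (B x /\ ~ A x)).
 { apply set_ext; intro x; split; [intro; destruct (classic (A x)); tauto | intros [H|H]; auto; tauto]. }
 rewrite E. rewrite (mu_add2 Hp).
 - pose proof (pr_nonneg Hp (fun x => B x /\ ~ A x) (M_inter Hp HB (M_compl Hp HA))). lra.
 - auto.
 - apply (M_inter Hp HB (M_compl Hp HA)).
 - intros x H1 H2; tauto.
Qed.

Lemma mu_sub2 {X} {M : (X -> Prop) -> Prop} {mu : (X -> Prop) -> R} (Hp : is_probability M mu) {A B} :
  M A -> M B -> mu (fun x => A x \/ B x) <= mu A + mu B.
Proof. intros HA HB.
 assert (E : (fun x => A x \/ B x) = fun x => A x \/ (B x /\ ~ A x)).
 { apply set_ext; intro x; split; [intro; destruct (classic (A x)); tauto | tauto]. }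
 rewrite E. rewrite (mu_add2 Hp).
 - pose proof (mu_mono Hp (M_inter Hp HB (M_compl Hp HA)) HB (fun x H => proj1 H)). lra.
 - auto.
 - apply (M_inter Hp HB (M_compl Hp HA)).
 - intros x H1 H2; tauto.
Qed.

Lemma M_list {X} {M : (X -> Prop) -> Prop} {mu : (X -> Prop) -> R} (Hp : is_probability M mu) {I : Type}
  (l : list I) (F : I -> X -> Prop) :
  (forall i, In i l -> M (F i)) -> M (fun x => exists i, In i l /\ F i x).
Proof. induction l as [|a l IH]; intro HF.
 - replace (fun x => exists i, In i nil /\ F i x) with (fun _ : X => False). apply (M_empty Hp).
   apply set_ext; intro x; split; [tauto| intros [i [[] _]]].
 - replace (fun x => exists i, In i (a :: l) /\ F i x) with (fun x => F a x \/ (exists i, In i l /\ F i x)).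
   apply (M_union2 Hp). apply HF; simpl; auto. apply IH; intros; apply HF; simpl; auto.
   apply set_ext; intro x; split.
   + intros [H|[i [Hi H]]]; [exists a | exists i]; simpl; auto.
   + intros [i [[Hi|Hi] H]]; [subst; auto | right; exists i; auto].
Qed.

Lemma mu_list {X} {M : (X -> Prop) -> Prop} {mu : (X -> Prop) -> R} (Hp : is_probability M mu) {I : Type}
  (l : list I) (F : I -> X -> Prop) (c : R) :
  (forall i, In i l -> M (F i)) -> (forall i, In i l -> mu (F i) <= c) ->
  mu (fun x => exists i, In i l /\ F i x) <= INR (length l) * c.
Proof. induction l as [|a l IH]; intros HF Hc.
 - replace (fun x => exists i, In i nil /\ F i x) with (fun _ : X => False). rewrite (pr_empty Hp). simpl; lra.
   apply set_ext; intro x; split; [tauto| intros [i [[] _]]].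
 - replace (fun x => exists i, In i (a :: l) /\ F i x) with (fun x => F a x \/ (exists i, In i l /\ F i x)).
   eapply Rle_trans. apply (mu_sub2 Hp). apply HF; simpl; auto.
   apply (M_list Hp); intros; apply HF; simpl; auto.
   assert (H1 : mu (F a) <= c) by (apply Hc; simpl; auto).
   assert (H2 : mu (fun x => exists i, In i l /\ F i x) <= INR (length l) * c)
     by (apply IH; intros; [apply HF|apply Hc]; simpl; auto).
   simpl length. rewrite S_INR. lra.
   apply set_ext; intro x; split.
   + intros [H|[i [Hi H]]]; [exists a | exists i]; simpl; auto.
   + intros [i [[Hi|Hi] H]]; [subst; auto | right; exists i; auto].
Qed.

Theorem mainTheorem14
  (G : Type) (mul : G -> G -> G) (inv : G -> G) (one : G)
  (Hgrp : is_group mul inv one)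
  (X : Type) (M : (X -> Prop) -> Prop) (mu : (X -> Prop) -> R)
  (Hprob : is_probability M mu)
  (act : X -> G -> X) (Hact : is_right_action mul one act)
  (Hmp : measure_preserving_action M mu act)
  (Herg : ergodic M mu act)
  (S : list G) (HSsym : symmetric_set inv S) (HSgen : generates mul one S)
  (H : G -> Prop) (HH : is_subgroup mul inv one H)
  (k : nat) (C : list G) (HC : right_transversal mul inv H C) (Hk : length C = k)
  (h : R) (Hh : cheeger_constant M mu act S h)
  (A : X -> Prop) (HA : M A) (HA0 : 0 < mu A) (HA1 : mu A <= 1 / (2 * INR k)) :
  mu (setminus (set_act act A (NS_set mul inv H S C)) A) / mu A >= h / INR k.
Proof.
  destruct Hgrp as [gA g1 g1' gV gV'].
  destruct Hact as [Ha1 Ha2].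
  assert (Ainv_r : forall x g, act (act x g) (inv g) = x).
  { intros. rewrite Ha2, gV', Ha1; reflexivity. }
  assert (Ainv_l : forall x g, act (act x (inv g)) g = x).
  { intros. rewrite Ha2, gV, Ha1; reflexivity. }
  destruct HC as [HCnd HCex].
  assert (Hkpos : 0 < INR k).
  { destruct (HCex one) as [c0 [[Hc0 _] _]]. apply lt_0_INR. subst k.
    destruct C; [destruct Hc0| simpl; lia]. }
  set (E := setminus (set_act act A (NS_set mul inv H S C)) A).
  assert (HTeq : set_act act A (NS_set mul inv H S C) =
    fun x => exists s, In s S /\ (fun s x => exists c, In c C /\ (fun c x => exists p, In p C /\
       (fun p x => H (mul (mul c s) (inv p)) /\ A (act x (inv (mul (mul c s) (inv p))))) p x) c x) s x).
  { apply set_ext; intro x; split.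
    - intros [a [t [Ha [[s [c [p [Hs [Hc [Hp [Hh' Ht]]]]]]] Hx]]]]. subst t x.
      exists s; split; auto. exists c; split; auto. exists p; split; auto. split; auto.
      rewrite Ainv_r; auto.
    - intros [s [Hs [c [Hc [p [Hp [Hh' Ha]]]]]]].
      exists (act x (inv (mul (mul c s) (inv p)))), (mul (mul c s) (inv p)).
      split; auto. split. exists s, c, p; auto. rewrite Ainv_l; reflexivity. }
  assert (HME : M E).
  { unfold E, setminus. apply (M_inter Hprob); [|apply (M_compl Hprob); auto].
    rewrite HTeq. apply (M_list Hprob); intros s _.
    apply (M_list Hprob); intros c _. apply (M_list Hprob); intros p _.
    apply (M_and_prop Hprob). apply (Hmp _ A HA). }
  set (B := fun x => exists c, In c C /\ preimage_act act (inv c) A x).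
  assert (HMB : M B). { apply (M_list Hprob); intros c _. apply (Hmp _ A HA). }
  assert (HBle : mu B <= INR k * mu A).
  { subst k. apply (mu_list Hprob). intros c _; apply (Hmp _ A HA).
    intros c _. rewrite (proj2 (Hmp _ A HA)). lra. }
  assert (HBge : mu A <= mu B).
  { destruct (HCex one) as [c0 [[Hc0 _] _]].
    rewrite <- (proj2 (Hmp (inv c0) A HA)). apply (mu_mono Hprob).
    apply (Hmp _ A HA). exact HMB. intros x Hx. exists c0; auto. }
  assert (HBhalf : mu B <= 1/2).
  { eapply Rle_trans; [exact HBle|].
    apply Rle_trans with (INR k * (1 / (2 * INR k))).
    apply Rmult_le_compat_l; lra. right; field; lra. }
  set (D := setminus (set_act act B (fun s => In s S)) B).
  assert (HBSeq : set_act act B (fun s => In s S) =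
     fun x => exists s, In s S /\ preimage_act act (inv s) B x).
  { apply set_ext; intro x; split.
    - intros [b [s [Hb [Hs Hx]]]]. subst x. exists s; split; auto. unfold preimage_act.
      rewrite Ainv_r; auto.
    - intros [s [Hs Hb]]. exists (act x (inv s)), s. split; [exact Hb|]. split; [exact Hs|]. rewrite Ainv_l; auto. }
  assert (HMD : M D).
  { unfold D, setminus. apply (M_inter Hprob); [|apply (M_compl Hprob); auto].
    rewrite HBSeq. apply (M_list Hprob); intros s _. apply (Hmp _ B HMB). }
  set (U := fun x => exists p, In p C /\ preimage_act act (inv p) E x).
  assert (HMU : M U). { apply (M_list Hprob); intros c _. apply (Hmp _ E HME). }
  assert (HDU : mu D <= mu U).
  { apply (mu_mono Hprob HMD HMU). intros x [[b [s [Hb [Hs Hx]]]] HnB].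
    destruct Hb as [c [Hc Hb]]. unfold preimage_act in Hb.
    set (a := act b (inv c)) in *.
    destruct (HCex (mul c s)) as [p [[Hp HHp] _]].
    exists p; split; auto. unfold preimage_act, E, setminus. split.
    - exists a, (mul (mul c s) (inv p)). split; auto. split.
      exists s, c, p; auto.
      subst x. unfold a. rewrite !Ha2. rewrite <- !gA. rewrite (gA (inv c) c (mul s (inv p))), gV, g1; reflexivity.
    - intro HAy. apply HnB. exists p; split; auto. }
  assert (HUle : mu U <= INR k * mu E).
  { subst k. apply (mu_list Hprob). intros c _; apply (Hmp _ E HME).
    intros c _. rewrite (proj2 (Hmp _ E HME)). lra. }
  assert (HE0 : 0 <= mu E) by (apply (pr_nonneg Hprob); auto).
  destruct (Rle_or_lt h 0) as [Hh0|Hh0].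
  - apply Rle_ge. apply Rle_trans with 0.
    assert (0 < / INR k) by (apply Rinv_0_lt_compat; lra). unfold Rdiv; nra.
    unfold Rdiv. apply Rmult_le_pos; [lra| left; apply Rinv_0_lt_compat; lra].
  - assert (HBpos : 0 < mu B) by lra.
    assert (Hr : h <= mu D / mu B).
    { apply (proj1 Hh). exists B. split; auto. }
    assert (HhD : h * mu B <= mu D).
    { apply Rle_trans with (mu D / mu B * mu B). apply Rmult_le_compat_r; lra.
      right; field; lra. }
    assert (HhA : h * mu A <= h * mu B) by (apply Rmult_le_compat_l; lra).
    apply Rle_ge. apply (Rmult_le_reg_r (INR k * mu A)). apply Rmult_lt_0_compat; lra.
    replace (h / INR k * (INR k * mu A)) with (h * mu A) by (field; lra).
    replace (mu E / mu A * (INR k * mu A)) with (INR k * mu E) by (field; lra).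
    lra.
Qed.
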